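(* Let $(\Omega,\mathcal F)$ be a measurable space with $\Sigma\neq\emptyset$, and let $v:\mathcal F\to\mathbb R$ be a non-decreasing continuous set function with $v(\emptyset)=0$. Then $\lim_{n\to\infty}v(A_n)=v(\bigcup_n A_n)$ for every sequence $A_1\subset A_2\subset\cdots$ in $\mathcal F$, and $\lim_{n\to\infty}v(A_n)=v(\bigcap_n A_n)$ for every sequence $A_1\supset A_2\supset\cdots$ in $\mathcal F$.
   Context: $\Sigma$ denotes the set of all classes $\mathcal I\subset\mathcal F$ that are chains (totally ordered by inclusion), contain $\emptyset$ and $\Omega$, and generate $\mathcal F$ as a $\sigma$-algebra. $v$ is non-decreasing if $v(A)\le v(B)$ for $A\subset B$. For $\mathcal I\in\Sigma$ let $\mathcal J$ be the algebra generated by $\mathcal I$, whose elements are the sets $\bigcup_{i=1}^n (C_i\cap D_i^c)$ with $C_1\supset D_1\supset\cdots\supset C_n\supset D_n$ in $\mathcal I$; define $\mu_{v,\mathcal I}$ on $\mathcal J$ by $\mu_{v,\mathcal I}(\bigcup_{i=1}^n (C_i\cap D_i^c))=\sum_{i=1}^n(v(C_i)-v(D_i))$. A non-decreasing $v$ is called continuous if for every $\mathcal I\in\Sigma$ the finitely additive $\mu_{v,\mathcal I}$ is $\sigma$-additive on $\mathcal J$. *)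

(* Defs.v *)
From HB Require Import structures.
From mathcomp Require Import all_boot all_order all_algebra.
From mathcomp Require Import all_classical all_reals all_analysis.
Set Implicit Arguments. Unset Strict Implicit. Unset Printing Implicit Defensive.
Import Order.TTheory GRing.Theory Num.Theory.
Import numFieldNormedType.Exports.
Local Open Scope classical_set_scope.
Local Open Scope ring_scope.

Section Defs.
Context {d : measure_display} {T : measurableType d} {R : realType}.

Definition in_Sigma (I : set (set T)) : Prop :=
  [/\ I `<=` measurable,
      (forall A B, I A -> I B -> A `<=` B \/ B `<=` A),
      I set0, I setT &
      <<s I >> = measurable].

(* (n, C, D) is a representation C_0 ⊇ D_0 ⊇ C_1 ⊇ D_1 ⊇ ... ⊇ C_{n-1} ⊇ D_{n-1}
   with all C_i, D_i in I (indices shifted to start at 0). *)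
Definition chain_rep (I : set (set T)) (n : nat) (C D : nat -> set T) : Prop :=
  (forall i, (i < n)%N -> [/\ I (C i), I (D i) & D i `<=` C i]) /\
  (forall i, (i.+1 < n)%N -> C i.+1 `<=` D i).

(* the element \bigcup_i (C_i \ D_i) of the algebra J generated by I *)
Definition rep_set (n : nat) (C D : nat -> set T) : set T :=
  \bigcup_(i in [set i | (i < n)%N]) (C i `&` ~` D i).

(* the value mu_{v,I} of that element *)
Definition rep_val (v : set T -> R) (n : nat) (C D : nat -> set T) : R :=
  \sum_(i < n) (v (C i) - v (D i)).

Definition nondecreasing_sf (v : set T -> R) : Prop :=
  forall A B, measurable A -> measurable B -> A `<=` B -> v A <= v B.

Definition mu_sigma_additive (v : set T -> R) (I : set (set T)) : Prop :=
  forall (nE : nat -> nat) (CE DE : nat -> nat -> set T)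
         (n : nat) (C D : nat -> set T),
    (forall k, chain_rep I (nE k) (CE k) (DE k)) ->
    chain_rep I n C D ->
    trivIset setT (fun k => rep_set (nE k) (CE k) (DE k)) ->
    \bigcup_k rep_set (nE k) (CE k) (DE k) = rep_set n C D ->
    (fun m => \sum_(k < m) rep_val v (nE k) (CE k) (DE k)) @ \oo
      --> rep_val v n C D.

Definition continuous_sf (v : set T -> R) : Prop :=
  nondecreasing_sf v /\
  forall I, in_Sigma I -> mu_sigma_additive v I.

End Defs.

(* Main.v *)
Require Import Defs.
From HB Require Import structures.
From mathcomp Require Import all_boot all_order all_algebra.
From mathcomp Require Import all_classical all_reals all_analysis.
From mathcomp Require Import ring lra.
Import Order.TTheory GRing.Theory Num.Theory.
Import numFieldNormedType.Exports.
Local Open Scope classical_set_scope.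
Local Open Scope ring_scope.

Section S.
Context {d : measure_display} {T : measurableType d}.

Definition ext (I : set (set T)) (lo hi : nat -> set T) : set (set T) :=
  [set X | exists k B, I B /\ X = lo k `|` (B `&` hi k)].

Lemma chain_ext (I : set (set T)) (lo hi : nat -> set T) k0 k1 :
  in_Sigma I -> (forall k, measurable (lo k)) -> (forall k, measurable (hi k)) ->
  (forall k, lo k `<=` hi k) ->
  (forall k m, k <> m -> hi k `<=` lo m \/ hi m `<=` lo k) ->
  (forall x, exists k, hi k x /\ ~ lo k x) ->
  lo k0 = set0 -> hi k1 = setT ->
  in_Sigma (ext I lo hi).
Proof.
move=> [Im Ich I0 IT Igen] mlo mhi lohi sep cov lo0 hi1.
have extm : ext I lo hi `<=` measurable.
  move=> X [k [B [IB ->]]]; apply: measurableU => //; apply: measurableI => //.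
  exact: Im.
split => //.
- move=> X Y [k [B [IB ->]]] [m [B' [IB' ->]]].
  have [<-|km] := eqVneq k m.
    case: (Ich B B' IB IB') => h; [left|right]; move=> x [lx|[bx hx]];
      by [left|right; split => //; apply: h].
  have [h|h] : hi k `<=` lo m \/ hi m `<=` lo k by apply: sep; apply/eqP.
    left => x [lx|[_ hx]]; left; apply: h => //; exact: lohi.
  right => x [lx|[_ hx]]; left; apply: h => //; exact: lohi.
- exists k0, set0; split => //; by rewrite set0I setU0 lo0.
- exists k1, setT; split => //; rewrite setTI -hi1; apply/seteqP; split.
    by move=> x hx; right.
  by move=> x [|//]; exact: lohi.
- apply/seteqP; split.
    apply: smallest_sub => //; exact: sigma_algebra_measurable.
  rewrite -Igen; apply: smallest_sub => //.
  move=> B IB.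
  have -> : B = \bigcup_k ((lo k `|` (B `&` hi k)) `\` lo k).
    apply/seteqP; split.
      move=> x Bx; have [k [hk lk]] := cov x; exists k => //; split => //.
      by right.
    by move=> x [k _ [[//|[]]]].
  have M : forall X, <<s ext I lo hi >> X -> @measurable _ (g_sigma_algebraType (ext I lo hi)) X by [].
  apply: M; apply: (@bigcupT_measurable _ (g_sigma_algebraType (ext I lo hi))) => k; apply: (@measurableD _ (g_sigma_algebraType (ext I lo hi))).
    by apply: sub_sigma_algebra; exists k, B.
  apply: sub_sigma_algebra; exists k, set0; split => //; by rewrite set0I setU0.
Qed.
Lemma ext_lo I lo hi k : I set0 -> ext I lo hi (lo k).
Proof. by move=> I0; exists k, set0; split => //; rewrite set0I setU0. Qed.

Lemma ext_hi I lo hi k : I setT -> lo k `<=` hi k -> ext I lo hi (hi k).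
Proof.
move=> IT h; exists k, setT; split => //; rewrite setTI; apply/seteqP; split.
  by move=> x hx; right.
by move=> x [|//]; exact: h.
Qed.

Lemma rep_set1 (X Y : set T) : rep_set 1 (fun _ => X) (fun _ => Y) = X `\` Y.
Proof.
apply/seteqP; split; first by move=> x [i /= _ h].
by move=> x h; exists 0%N.
Qed.

Lemma incr_mono (A : nat -> set T) : (forall n, A n `<=` A n.+1) ->
  forall i j, (i <= j)%N -> A i `<=` A j.
Proof.
move=> h i j /subnK <-; elim: (j - i)%N => // n IH.
rewrite addSn; exact: subset_trans IH (h _).
Qed.

Lemma decr_mono (A : nat -> set T) : (forall n, A n.+1 `<=` A n) ->
  forall i j, (i <= j)%N -> A j `<=` A i.
Proof.
move=> h i j /subnK <-; elim: (j - i)%N => // n IH.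
rewrite addSn; exact: subset_trans (h _) IH.
Qed.

Lemma first_entry (A : nat -> set T) n x : A n x ->
  A 0%N x \/ exists j, A j.+1 x /\ ~ A j x.
Proof.
elim: n => [|n IH] h; first by left.
have [hn|hn] := pselect (A n x); first exact: IH.
by right; exists n.
Qed.

Lemma first_exit (A : nat -> set T) n x : ~ A n x ->
  ~ A 0%N x \/ exists j, A j x /\ ~ A j.+1 x.
Proof.
elim: n => [|n IH] h; first by left.
have [hn|hn] := pselect (A n x); last exact: IH.
by right; exists n.
Qed.

Context {R : realType}.

Lemma key (v : set T -> R) (I : set (set T)) (Cs Ds : nat -> set T) (Ct Dt : set T) :
  mu_sigma_additive v I ->
  (forall k, I (Cs k)) -> (forall k, I (Ds k)) -> (forall k, Ds k `<=` Cs k) ->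
  I Ct -> I Dt -> Dt `<=` Ct ->
  trivIset setT (fun k => Cs k `\` Ds k) ->
  \bigcup_k (Cs k `\` Ds k) = Ct `\` Dt ->
  (fun m => \sum_(k < m) (v (Cs k) - v (Ds k))) @ \oo --> v Ct - v Dt.
Proof.
move=> sa ICs IDs DCs ICt IDt DCt tr U.
have := sa (fun _ => 1%N) (fun k _ => Cs k) (fun k _ => Ds k) 1%N
  (fun _ => Ct) (fun _ => Dt).
have E : (fun m => \sum_(k < m) rep_val v 1 (fun _ => Cs k) (fun _ => Ds k))
  = (fun m => \sum_(k < m) (v (Cs k) - v (Ds k))).
  by apply/funext => m; apply: eq_bigr => k _; rewrite /rep_val big_ord1.
rewrite E /rep_val big_ord1; apply.
- by move=> k; split => // i; rewrite ltnS leqn0 => /eqP ->.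
- by split => // i; rewrite ltnS leqn0 => /eqP ->.
- by under eq_fun do rewrite rep_set1.
- by under eq_bigcupr do rewrite rep_set1; rewrite rep_set1.
Qed.
End S.

Theorem proposition3 (d : measure_display) (T : measurableType d) (R : realType)
  (v : set T -> R) :
  (exists I : set (set T), in_Sigma I) ->
  nondecreasing_sf v ->
  continuous_sf v ->
  v set0 = 0 ->
  (forall A : nat -> set T, (forall n, measurable (A n)) ->
     (forall n, A n `<=` A n.+1) ->
     v (A n) @[n --> \oo] --> v (\bigcup_n A n)) /\
  (forall A : nat -> set T, (forall n, measurable (A n)) ->
     (forall n, A n.+1 `<=` A n) ->
     v (A n) @[n --> \oo] --> v (\bigcap_n A n)).
Proof.
move=> [I HI] _ [_ cont] _.
have [Im Ich I0 IT Igen] := HI.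
split.
- move=> A mA incA.
  set Ai := \bigcup_n A n.
  have mAi : measurable Ai by exact: bigcupT_measurable.
  pose lo k := match k with 0%N => set0 | 1%N => Ai | j.+2 => A j end.
  pose hi k := match k with 0%N => A 0%N | 1%N => setT | j.+2 => A j.+1 end.
  have lohi : forall k, lo k `<=` hi k.
    by case=> [|[|j]] //=; try exact: incA.
  have HI' : in_Sigma (ext I lo hi).
    apply: (@chain_ext _ _ I lo hi 0%N 1%N HI _ _ lohi _ _ erefl erefl).
    + by case=> [|[|j]] //=.
    + by case=> [|[|j]] //=.
    + case=> [|[|j]] [|[|i]] //= ki; try by case: ki.
      * by left => x Ax; exists 0%N.
      * by left; apply: incr_mono.
      * by right => x Ax; exists 0%N.
      * by right => x Ax; exists i.+1.
      * by right; apply: incr_mono.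
      * by left => x Ax; exists j.+1.
      * case: (ltngtP j i) => [ji|ij|ji]; first by left; apply: incr_mono.
          by right; apply: incr_mono.
        by case: ki; rewrite ji.
    + move=> x; have [[n _ Anx]|nAi] := pselect (Ai x).
        have [A0x|[j [h1 h2]]] := first_entry _ _ _ Anx.
          by exists 0%N; split.
        by exists j.+2; split.
      by exists 1%N.
  have H := @key _ _ _ v (ext I lo hi) A
    (fun k => match k with 0%N => set0 | j.+1 => A j end) Ai set0 (cont _ HI').
  have {}H := H (fun k => ext_lo I lo hi k.+2 I0) _ _ (ext_lo I lo hi 1 I0) (ext_lo I lo hi 0 I0) (sub0set _).
  pose Ds k := match k with 0%N => set0 | j.+1 => A j end.
  have {}H := H _ (fun k => match k with 0%N => sub0set _ | j.+1 => incA j end).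
  have IDs : forall k, ext I lo hi (Ds k).
    by case=> [|j]; [exact: (ext_lo I lo hi 0 I0) | exact: (ext_lo I lo hi j.+2 I0)].
  have tr : trivIset setT (fun k => A k `\` Ds k).
    move=> i j _ _ [x [[Aix nix] [Ajx njx]]].
    have [ij|ji|->//] := ltngtP i j.
    - by case: j ij Ajx njx => // j ij _ []; apply: incr_mono Aix.
    - by case: i ji Aix nix => // i ji _ []; apply: incr_mono Ajx.
  have U : \bigcup_k (A k `\` Ds k) = Ai `\` set0.
    apply/seteqP; split.
      by move=> x [k _ [Akx _]]; split => //; exists k.
    move=> x [[n _ Anx] _]; have [A0x|[j [h1 h2]]] := first_entry _ _ _ Anx.
      by exists 0%N => //; split.
    by exists j.+1 => //; split.
  have {}H := H IDs tr U.
  have S : forall m, \sum_(k < m.+1) (v (A k) - v (Ds k)) = v (A m) - v set0.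
    elim=> [|m IH]; first by rewrite big_ord1.
    rewrite big_ord_recr /= IH; lra.
  rewrite -cvg_shiftS in H.
  have E : (fun n => v (A n)) = (fun n => \sum_(k < n.+1) (v (A k) - v (Ds k)) + v set0).
    by apply/funext => n; rewrite S subrK.
  rewrite E; have := cvgD H (cvg_cst (v set0)); rewrite subrK; exact.
- move=> A mA decA.
  set Ai := \bigcap_n A n.
  have mAi : measurable Ai by exact: bigcapT_measurable.
  pose lo k := match k with 0%N => set0 | 1%N => A 0%N | j.+2 => A j.+1 end.
  pose hi k := match k with 0%N => Ai | 1%N => setT | j.+2 => A j end.
  have lohi : forall k, lo k `<=` hi k.
    by case=> [|[|j]] //=; try exact: decA.
  have HI' : in_Sigma (ext I lo hi).
    apply: (@chain_ext _ _ I lo hi 0%N 1%N HI _ _ lohi _ _ erefl erefl).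
    + by case=> [|[|j]] //=.
    + by case=> [|[|j]] //=.
    + case=> [|[|j]] [|[|i]] //= ki; try by case: ki.
      * by left => x Aix; apply: Aix.
      * by left => x Aix; apply: Aix.
      * by right => x Aix; apply: Aix.
      * by right; apply: decr_mono.
      * by right => x Aix; apply: Aix.
      * by left; apply: decr_mono.
      * have [ji|ij|ji] := ltngtP j i; first by right; apply: decr_mono.
          by left; apply: decr_mono.
        by case: ki; rewrite ji.
    + move=> x; have [Aix|nAi] := pselect (Ai x).
        by exists 0%N; split.
      have : ~ (forall n, A n x) by move=> h; apply: nAi => n _; exact: h.
      move/existsNP => [n nAn].
      have [nA0|[j [h1 h2]]] := first_exit _ _ _ nAn.
        by exists 1%N; split.
      by exists j.+2; split.
  have H := @key _ _ _ v (ext I lo hi) A (fun k => A k.+1) (A 0%N) Ai (cont _ HI')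
    (fun k => ext_hi I lo hi k.+2 IT (lohi _)) (fun k => ext_lo I lo hi k.+2 I0)
    decA (ext_lo I lo hi 1 I0) (ext_hi I lo hi 0 IT (lohi _)) (fun x h => h 0%N Logic.I).
  have tr : trivIset setT (fun k => A k `\` A k.+1).
    move=> i j _ _ [x [[Aix nix] [Ajx njx]]].
    have [ij|ji|->//] := ltngtP i j.
    - by case: nix; apply: decr_mono Ajx.
    - by case: njx; apply: decr_mono Aix.
  have U : \bigcup_k (A k `\` A k.+1) = A 0%N `\` Ai.
    apply/seteqP; split.
      move=> x [k _ [Akx nAk]]; split; first exact: (decr_mono _ decA _ _ (leq0n k)).
      by move=> h; apply: nAk; apply: h.
    move=> x [A0x nAi].
    have : ~ (forall n, A n x) by move=> h; apply: nAi => n _; exact: h.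
    move/existsNP => [n nAn].
    have [nA0|[j [h1 h2]]] := first_exit _ _ _ nAn; first by [].
    by exists j => //; split.
  have {}H := H tr U.
  have S : forall m, \sum_(k < m) (v (A k) - v (A k.+1)) = v (A 0%N) - v (A m).
    elim=> [|m IH]; first by rewrite big_ord0 subrr.
    rewrite big_ord_recr /= IH; lra.
  have E : (fun n => v (A n)) = (fun n => v (A 0%N) - \sum_(k < n) (v (A k) - v (A k.+1))).
    by apply/funext => n; rewrite S; lra.
  rewrite E; have := cvgB (cvg_cst (v (A 0%N))) H.
  have -> : v (A 0%N) - (v (A 0%N) - v Ai) = v Ai by lra.
  exact.
Qed.
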